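(* Let $\mathcal{A},\widetilde{\mathcal{A}}$ be finite alphabets, $\pi:\mathcal{A}\to\widetilde{\mathcal{A}}$ a map, $D\geq1$, $\mathcal{F}\subseteq\mathcal{A}^{[\![1,D]\!]^2}$, $R\geq D$, and $M\subseteq\mathcal{A}^{[\![1,R]\!]^2}$ the set of locally $\mathcal{F}$-admissible patterns of size $R$. Assume that every $w\in M$ is vertically aligned after projection: $\pi(w(i,j))=\pi(w(i,j'))$ for all $i,j,j'\in[\![1,R]\!]$. Let $\mu$ be an ergodic shift-invariant probability measure with $\mu(\Sigma^2(\mathcal{A})\setminus[M])\leq\epsilon$ for some $\epsilon\in[0,1/2]$. Let $\widetilde{\mathcal{G}}=\{\widetilde G_a:a\in\widetilde{\mathcal{A}}\}$ with $\widetilde G_a=\{x:\pi(x(0))=a\}$ and $\mathcal{U}=\{[M],\Sigma^2(\mathcal{A})\setminus[M]\}$. Then (1) $\limsup_{n\to\infty}\frac{1}{n^2}H\big(\mathcal{U}^{[\![0,n-R]\!]^2},\mu\big)\leq H(\epsilon)$; (2) $\limsup_{n\to\infty}\frac{1}{n^2}H\big(\widetilde{\mathcal{G}}^{[\![1,n]\!]^2}\mid\mathcal{U}^{[\![0,n-R]\!]^2},\mu\big)\leq\big(\frac{8}{R}+\epsilon\big)\ln(\mathrm{card}(\widetilde{\mathcal{A}}))$, where $H(\epsilon)=-\epsilon\ln\epsilon-(1-\epsilon)\ln(1-\epsilon)$ (with $H(0)=0$).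
   Context: A pattern $w\in\mathcal{A}^{[\![1,R]\!]^2}$ is locally $\mathcal{F}$-admissible if $(\sigma^u w)|_{[\![1,D]\!]^2}\notin\mathcal{F}$ for all $u\in[\![0,R-D]\!]^2$, where $\sigma^u(w)(v)=w(u+v)$. $[M]=\{x\in\mathcal{A}^{\mathbb{Z}^2}:x|_{[\![1,R]\!]^2}\in M\}$. For a partition $\mathcal{P}$ and finite $S\subseteq\mathbb{Z}^2$, $\mathcal{P}^S=\bigvee_{u\in S}\sigma^{-u}\mathcal{P}$; $H(\mathcal{P},\mu)=-\sum_{P}\mu(P)\ln\mu(P)$ and $H(\mathcal{P}\mid\mathcal{Q},\mu)$ is the conditional entropy. *)

(* Defs.v *)
From HB Require Import structures.
From mathcomp Require Import all_boot all_order all_algebra.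
From mathcomp Require Import all_classical all_reals all_analysis.
Set Implicit Arguments.
Unset Strict Implicit.
Unset Printing Implicit Defensive.
Import Order.TTheory GRing.Theory Num.Theory.
Local Open Scope classical_set_scope.
Local Open Scope ring_scope.

(* Configurations of the full shift Sigma^2(A) = A^{Z^2}.  The extra
   element a0 only serves to equip the type with a pointed structure,
   required by MathComp-Analysis measurable types. *)
Definition cfg (A : finType) (a0 : A) : pointedType :=
  HB.pack (int * int -> A)%type (Choice.on (int * int -> A)%type)
    (isPointed.Build (int * int -> A)%type (fun _ => a0)).

Definition cyl (A : finType) (a0 : A) : set (set (@cfg A a0)) :=
  [set E | exists (u : int * int) (a : A), E = [set x | x u = a]].

Definition Sigma2 (A : finType) (a0 : A) := g_sigma_algebraType (@cyl A a0).

Definition shift (A : Type) (u : int * int) (x : int * int -> A) : int * int -> A :=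
  fun v => x (u.1 + v.1, u.2 + v.2).

Definition shift_invariant (A : finType) (a0 : A) (RR : realType)
  (mu : probability (Sigma2 a0) RR) : Prop :=
  forall (u : int * int) (E : set (Sigma2 a0)), measurable E ->
    mu ((shift u) @^-1` E) = mu E.

Definition ergodic (A : finType) (a0 : A) (RR : realType)
  (mu : probability (Sigma2 a0) RR) : Prop :=
  forall E : set (Sigma2 a0), measurable E ->
    (forall u : int * int, (shift u) @^-1` E = E) ->
    mu E = 0%E \/ mu E = 1%E.

(* A pattern on [[1,N]]^2 is encoded as a finite function on 'I_N * 'I_N,
   the ordinal k standing for the coordinate k+1. *)
Lemma ord_shift_proof (R D a : nat) (H : (a + D <= R)%N) (i : 'I_D) :
  (a + i < R)%N.
Proof. by apply: leq_trans H; rewrite ltn_add2l. Qed.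

Definition ord_shift (R D a : nat) (H : (a + D <= R)%N) (i : 'I_D) : 'I_R :=
  Ordinal (ord_shift_proof H i).

Definition loc_adm (A : finType) (D R : nat) (F : {set {ffun 'I_D * 'I_D -> A}})
  (w : {ffun 'I_R * 'I_R -> A}) : Prop :=
  forall (a b : nat) (Ha : (a + D <= R)%N) (Hb : (b + D <= R)%N),
    [ffun v : 'I_D * 'I_D => w (ord_shift Ha v.1, ord_shift Hb v.2)] \notin F.

Definition restr (A : Type) (R : nat) (x : int * int -> A)
  : {ffun 'I_R * 'I_R -> A} :=
  [ffun k : 'I_R * 'I_R => x ((k.1.+1)%:Z, (k.2.+1)%:Z)].

Definition cylM (A : finType) (D R : nat) (F : {set {ffun 'I_D * 'I_D -> A}})
  : set (int * int -> A) :=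
  [set x | loc_adm F (restr R x)].

(* A finite partition is given by a labelling map f : T -> L; its cells are
   the fibres f^{-1}(l) (empty fibres contribute 0). *)
Definition xlnx (RR : realType) (t : RR) : RR := if t == 0 then 0 else t * ln t.

Definition part_entropy (T : Type) (RR : realType) (mu : set T -> \bar RR)
  (L : finType) (f : T -> L) : RR :=
  - \sum_(l : L) xlnx (fine (mu (f @^-1` [set l]))).

Definition cond_entropy (T : Type) (RR : realType) (mu : set T -> \bar RR)
  (L K : finType) (f : T -> L) (g : T -> K) : RR :=
  - \sum_(l : L) \sum_(k : K)
      (let p := fine (mu (f @^-1` [set l] `&` g @^-1` [set k])) in
       let q := fine (mu (g @^-1` [set k])) in
       if p == 0 then 0 else p * ln (p / q)).

(* P^S = \/_{u in S} sigma^{-u} P, for a finite index set S embedded in Z^2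
   by toZ : the label of x is (f (sigma^u x))_{u in S} *)
Definition part_join (A : Type) (L S : finType) (toZ : S -> int * int)
  (f : (int * int -> A) -> L) (x : int * int -> A) : {ffun S -> L} :=
  [ffun s : S => f (shift (toZ s) x)].

(* [[0, n-R]]^2, indexed by 'I_(n+1-R) * 'I_(n+1-R) (empty if n < R) *)
Definition box0 (n R : nat) := ('I_(n.+1 - R) * 'I_(n.+1 - R))%type.
Definition box0Z (n R : nat) (s : box0 n R) : int * int := ((s.1 : nat)%:Z, (s.2 : nat)%:Z).

Definition box1 (n : nat) := ('I_n * 'I_n)%type.
Definition box1Z (n : nat) (s : box1 n) : int * int := (((s.1 : nat).+1)%:Z, ((s.2 : nat).+1)%:Z).

Definition labU (A : finType) (D R : nat) (F : {set {ffun 'I_D * 'I_D -> A}})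
  (x : int * int -> A) : bool := `[< cylM R F x >].

Definition labG (A At : Type) (pi : A -> At) (x : int * int -> A) : At := pi (x (0, 0)).

Definition Hbin (RR : realType) (e : RR) : RR := - xlnx e - xlnx (1 - e).

(* Main.v *)
Require Import Defs.
From HB Require Import structures.
From mathcomp Require Import all_boot all_order all_algebra.
From mathcomp Require Import all_classical all_reals all_analysis.
From mathcomp Require Import zify lra ring.
Import Order.TTheory GRing.Theory Num.Theory.
Local Open Scope classical_set_scope.
Local Open Scope ring_scope.
Set Implicit Arguments. Unset Strict Implicit. Unset Printing Implicit Defensive.


Lemma esup_ev (RR : realType) (u : nat -> \bar RR) (c : \bar RR) N :
  (forall n, (N <= n)%N -> (u n <= c)%E) -> (limn_esup u <= c)%E.
Proof.
move=> H; rewrite /limn_esup /limf_esup.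
apply: (@le_trans _ _ (ereal_sup (u @` [set k | (N <= k)%N]))).
  apply: ereal_inf_lbound; exists [set k | (N <= k)%N] => //; exists N => //.
by apply: ub_ereal_sup => _ [k /= Hk <-]; apply: H.
Qed.

Lemma sum_fibers d (T : measurableType d) (R : realType)
  (mu : {measure set T -> \bar R}) (K : finType) (h : T -> K) (E : set T) (B : pred K) :
  measurable E -> (forall k, measurable (h @^-1` [set k])) ->
  (\sum_(k | B k) mu (h @^-1` [set k] `&` E) = mu (h @^-1` [set k | B k] `&` E))%E.
Proof.
move=> mE mh.
have gen r : uniq r -> (\sum_(k <- r | B k) mu (h @^-1` [set k] `&` E) =
   mu ([set x | B (h x) && (h x \in r)] `&` E))%E.
  elim: r => [|k r IH] /=.
    move=> _; rewrite big_nil.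
    have -> : [set x | B (h x) && (h x \in [::])] `&` E = set0.
      by apply/seteqP; split => x //=; rewrite in_nil andbF; case.
    by rewrite measure0.
  move=> /andP[kr ur]; rewrite big_cons (IH ur).
  have mr : measurable ([set x | B (h x) && (h x \in r)] `&` E).
    have -> : [set x | B (h x) && (h x \in r)] =
      \big[setU/set0]_(k' <- r | B k') (h @^-1` [set k']).
      apply/seteqP; split => x /=.
        move=> /andP[Bx xr]; rewrite -bigcup_seq_cond; exists (h x) => //=.
        by rewrite xr Bx.
      by rewrite -bigcup_seq_cond => -[k' /= /andP[k'r Bk'] ->]; rewrite Bk' k'r.
    by apply: measurableI => //; apply: bigsetU_measurable.
  case: ifP => Bk.
    rewrite -measureU //; last first.
      - apply/seteqP; split => x //= [[hk _] [/andP[_ hr] _]].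
        by move: kr; rewrite -hk hr.
      - by apply: measurableI.
    congr (mu _); apply/seteqP; split => x /=.
      by case=> [[-> Ex]|[/andP[Bx xr] Ex]]; rewrite ?inE ?eqxx ?Bk ?Bx ?xr ?orbT.
    move=> [/andP[Bx]]; rewrite inE => /orP[/eqP hk|xr] Ex; [left|right] => //.
    by rewrite Bx xr.
  congr (mu _); apply/seteqP; split => x /=.
    by move=> [/andP[Bx xr] Ex]; split => //; rewrite inE xr orbT Bx.
  move=> [/andP[Bx]]; rewrite inE => /orP[/eqP hk|xr] Ex; last by split => //; rewrite Bx xr.
  by move: Bk; rewrite -hk Bx.
rewrite [LHS](gen _ (index_enum_uniq K)); congr (mu _).
by apply/seteqP; split => x /=; rewrite mem_index_enum andbT.
Qed.

Section Meas.
Variables (A : finType) (a0 : A).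

Lemma meas_cyl (u : int * int) (a : A) :
  measurable ([set x | x u = a] : set (Sigma2 a0)).
Proof. by apply: sub_gen_smallest; exists u, a. Qed.

Lemma meas_fin (S : finType) (toZ : S -> int * int) (P : {ffun S -> A} -> Prop) :
  measurable ([set x | P [ffun s => x (toZ s)]] : set (Sigma2 a0)).
Proof.
have -> : ([set x | P [ffun s => x (toZ s)]] : set (Sigma2 a0)) =
  \big[setU/set0]_(phi <- enum {ffun S -> A} | `[< P phi >])
     \big[setI/setT]_(s <- enum S) [set x | x (toZ s) = phi s].
  apply/seteqP; split => x /=.
    move=> Hx; rewrite -bigcup_seq_cond; exists [ffun s => x (toZ s)].
      by rewrite /= mem_enum; apply/asboolP.
    rewrite -bigcap_seq => s _ /=; by rewrite ffunE.
  rewrite -bigcup_seq_cond => -[phi /= /andP[_ /asboolP Pphi]].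
  rewrite -bigcap_seq => Hs; suff -> : [ffun s => x (toZ s)] = phi by [].
  by apply/ffunP => s; rewrite ffunE; apply: (Hs s); rewrite /= mem_enum.
apply: bigsetU_measurable => phi _; apply: bigsetI_measurable => s _.
exact: meas_cyl.
Qed.

Lemma meas_dep (S : finType) (toZ : S -> int * int) (P : (int * int -> A) -> Prop) :
  (forall x y, (forall s, x (toZ s) = y (toZ s)) -> P x -> P y) ->
  measurable ([set x | P x] : set (Sigma2 a0)).
Proof.
move=> HP.
have -> : ([set x | P x] : set (Sigma2 a0)) =
  [set x | (fun phi => exists y, P y /\ [ffun s => y (toZ s)] = phi) [ffun s => x (toZ s)]].
  apply/seteqP; split => x /=; first by move=> Px; exists x.
  move=> [y [Py Hy]]; apply: (HP y) Py => s.
  by have := congr1 (fun f : {ffun S -> A} => f s) Hy; rewrite !ffunE.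
exact: (meas_fin toZ (fun phi => exists y, P y /\ [ffun s => y (toZ s)] = phi)).
Qed.
End Meas.


Section Real.
Variable RR : realType.

Lemma ln_le_sub1 (y : RR) : 0 < y -> ln y <= y - 1.
Proof.
move=> y0; have := @le_ln1Dx RR (y - 1).
rewrite addrCA subrr addr0; apply; rewrite ltrBrDl; lra.
Qed.

Lemma gibbs_term (p q : RR) : 0 <= p -> 0 <= q -> (0 < p -> 0 < q) ->
  - xlnx p <= - (p * ln q) + q - p.
Proof.
move=> p0 q0 pq; rewrite /xlnx; case: eqP => [->|/eqP pn0].
  by rewrite mul0r oppr0; lra.
have pp : 0 < p by rewrite lt_def pn0.
have qp := pq pp.
have := ln_le_sub1 (divr_gt0 qp pp).
rewrite ln_div ?posrE // => H.
have := ler_wpM2l p0 H; rewrite mulrBr mulrBr mulr1 mulrCA divff // mulr1.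
by move=> H2; rewrite mulrC; lra.
Qed.

Lemma ln_prod (I : Type) (r : seq I) (P : pred I) (F : I -> RR) :
  (forall i, P i -> 0 < F i) -> ln (\prod_(i <- r | P i) F i) = \sum_(i <- r | P i) ln (F i).
Proof.
move=> HF.
suff : 0 < \prod_(i <- r | P i) F i /\ ln (\prod_(i <- r | P i) F i) = \sum_(i <- r | P i) ln (F i) by case.
apply: (big_ind2 (fun a b => 0 < a /\ ln a = b)).
- by rewrite ln1.
- move=> x1 x2 y1 y2 [x0 <-] [y0 <-]; split; first exact: mulr_gt0.
  by rewrite lnM ?posrE.
- by move=> i Pi; split => //; exact: HF.
Qed.

Lemma cond_term (L : finType) (p : L -> RR) (q : RR) :
  (forall l, 0 <= p l) -> q = \sum_l p l ->
  - \sum_l (if p l == 0 then 0 else p l * ln (p l / q))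
    <= q * ln (#|[set l | p l != 0]%SET|%:R).
Proof.
move=> p0 qE.
set N := #|[set l | p l != 0]%SET|.
have [N0|Npos] := eqVneq N 0%N.
  have allz l : p l = 0.
    apply/eqP; apply: contraT => pl; have := card0_eq N0 l.
    by rewrite inE pl.
  rewrite big1 ?oppr0; last by move=> l _; rewrite allz eqxx.
  by rewrite N0 ln0 ?mulr0.
have Np : (0 < N%:R :> RR) by rewrite ltr0n lt0n.
have qp l : p l != 0 -> 0 < q.
  move=> pl; rewrite qE; apply: (@lt_le_trans _ _ (p l)); first by rewrite lt_def pl p0.
  by rewrite (bigD1 l) //= lerDl sumr_ge0.
have key l : - (if p l == 0 then 0 else p l * ln (p l / q))
   <= p l * ln N%:R + (if p l == 0 then 0 else q / N%:R) - p l.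
  case: eqP => [->|/eqP pl]; first by rewrite mul0r !oppr0; lra.
  have pp : 0 < p l by rewrite lt_def pl p0.
  have q0 := qp l pl.
  have e1 : ln (q / (p l * N%:R)) = ln q - (ln (p l) + ln N%:R).
    by rewrite ln_div ?posrE ?mulr_gt0 // lnM ?posrE.
  have e2 : ln (p l / q) = ln (p l) - ln q by rewrite ln_div ?posrE.
  have H := ln_le_sub1 (divr_gt0 q0 (mulr_gt0 pp Np)); rewrite e1 in H.
  have e3 : p l * (q / (p l * N%:R)) = q / N%:R.
    by field; rewrite ?gt_eqF.
  have H2 := ler_wpM2l (p0 l) H.
  rewrite !mulrBr mulrDr mulr1 e3 in H2.
  rewrite e2 mulrBr; lra.
rewrite -sumrN; apply: (le_trans (ler_sum _ (fun l _ => key l))).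
rewrite !big_split /= -mulr_suml -qE sumrN.
have -> : \sum_i (if p i == 0 then 0 else q / N%:R) = q.
  rewrite (bigID (fun i => p i == 0)) /= big1 ?add0r; last by move=> i ->.
  rewrite (eq_bigr (fun _ => q / N%:R)); last by move=> i /negbTE ->.
  rewrite sumr_const.
  have -> : #|[pred i | ~~ (p i == 0)]| = N by rewrite /N cardsE.
  by rewrite -(mulr_natr (q / N%:R)) -mulrA mulVf ?gt_eqF // mulr1.
lra.
Qed.
End Real.


Section Main.
Variables (RR : realType) (A At : finType) (a0 : A) (pi : A -> At)
  (D : nat) (F : {set {ffun 'I_D * 'I_D -> A}}) (R : nat)
  (mu : probability (Sigma2 a0) RR).

Definition Pm (E : set (Sigma2 a0)) : RR := fine (mu E).

Lemma mu_fin (E : set (Sigma2 a0)) : measurable E -> mu E \is a fin_num.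
Proof.
move=> mE; rewrite ge0_fin_numE ?measure_ge0 //.
by apply: (le_lt_trans (probability_le1 mu mE)); rewrite ltry.
Qed.

Lemma Pm_ge0 E : 0 <= Pm E.
Proof. by apply: fine_ge0; apply: measure_ge0. Qed.

Lemma Pm_le E E' : measurable E -> measurable E' -> E `<=` E' -> Pm E <= Pm E'.
Proof.
move=> mE mE' sub; apply: fine_le; rewrite ?mu_fin //.
by apply: le_measure => //; rewrite inE.
Qed.

Lemma Pm_setT : Pm setT = 1.
Proof. by rewrite /Pm probability_setT. Qed.

Lemma Pm_sum (K : finType) (h : Sigma2 a0 -> K) (E : set (Sigma2 a0)) (B : pred K) :
  measurable E -> (forall k, measurable (h @^-1` [set k])) ->
  \sum_(k | B k) Pm (h @^-1` [set k] `&` E) = Pm (h @^-1` [set k | B k] `&` E).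
Proof.
move=> mE mh; rewrite /Pm sum_fine; last first.
  by move=> k _; apply: mu_fin; apply: measurableI.
by rewrite (@sum_fibers _ _ _ mu _ h E B mE mh).
Qed.

Lemma Pm_sumT (K : finType) (h : Sigma2 a0 -> K) (B : pred K) :
  (forall k, measurable (h @^-1` [set k])) ->
  \sum_(k | B k) Pm (h @^-1` [set k]) = Pm (h @^-1` [set k | B k]).
Proof.
move=> mh; have := @Pm_sum _ h setT B (@measurableT _ _) mh.
by rewrite setIT; under eq_bigr do rewrite setIT.
Qed.

Lemma Pm_sum1 (K : finType) (h : Sigma2 a0 -> K) :
  (forall k, measurable (h @^-1` [set k])) ->
  \sum_k Pm (h @^-1` [set k]) = 1.
Proof.
move=> mh; rewrite (@Pm_sumT _ h predT mh) -Pm_setT; congr Pm.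
by apply/seteqP; split.
Qed.

Lemma restr_shift_eq (u : int * int) (x y : int * int -> A) :
  (forall t : 'I_R * 'I_R, x (u.1 + (t.1.+1)%:Z, u.2 + (t.2.+1)%:Z) =
                          y (u.1 + (t.1.+1)%:Z, u.2 + (t.2.+1)%:Z)) ->
  restr R (Defs.shift u x) = restr R (Defs.shift u y).
Proof. by move=> H; apply/ffunP => t; rewrite !ffunE; apply: H. Qed.

Definition Uset (u : int * int) (b : bool) : set (Sigma2 a0) :=
  [set x | labU R F (Defs.shift u x) = b].

Lemma meas_Uset u b : measurable (Uset u b).
Proof.
rewrite /Uset; apply: (meas_dep (toZ := fun t : 'I_R * 'I_R => (u.1 + (t.1.+1)%:Z, u.2 + (t.2.+1)%:Z))).
by move=> x y H; rewrite /labU /cylM /= (restr_shift_eq H).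
Qed.

Lemma meas_cylM : measurable (cylM R F : set (Sigma2 a0)).
Proof.
rewrite /cylM; apply: (meas_dep (toZ := fun t : 'I_R * 'I_R => ((t.1.+1)%:Z, (t.2.+1)%:Z))).
move=> x y H; rewrite /cylM /=.
suff -> : restr R x = restr R y by [].
by apply/ffunP => t; rewrite !ffunE; apply: H.
Qed.

Definition beta := Pm (~` cylM R F).

Hypothesis shinv : shift_invariant mu.

Lemma Pm_Uset_false u : Pm (Uset u false) = beta.
Proof.
rewrite /beta /Pm -(shinv u (measurableC meas_cylM)); congr (fine (mu _)).
apply/seteqP; split => x /=; rewrite /labU.
  by move=> H Hc; move: H; rewrite /Uset /= /labU asboolT.
by move=> H; rewrite /Uset /= /labU asboolF.
Qed.


Definition gU n (x : int * int -> A) : {ffun box0 n R -> bool} :=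
  part_join (@box0Z n R) (labU R F) x.

Lemma gU_E n x s : gU n x s = labU R F (Defs.shift (box0Z s) x).
Proof. by rewrite ffunE. Qed.

Lemma meas_gU n k : measurable (gU n @^-1` [set k] : set (Sigma2 a0)).
Proof.
apply: (meas_dep (P := fun x => gU n x = k)
  (toZ := fun st : (box0 n R * ('I_R * 'I_R))%type =>
     (((st.1.1 : nat)%:Z + (st.2.1.+1)%:Z), ((st.1.2 : nat)%:Z + (st.2.2.+1)%:Z)))).
move=> x y H <-; apply/ffunP => s; rewrite !gU_E /labU /cylM /=.
by rewrite (@restr_shift_eq _ x y) // => t; exact: (H (s, t)).
Qed.

Lemma margE n s b : [set x | gU n x s = b] = Uset (box0Z s) b.
Proof. by apply/seteqP; split => x /=; rewrite gU_E. Qed.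

Lemma part1 n (eps : RR) : 0 <= eps -> eps <= 1 / 2 -> beta <= eps -> (1 <= R)%N ->
  part_entropy mu (gU n) / (n%:R ^+ 2) <= Hbin eps.
Proof.
move=> e0 e12 be R1.
set p := fun w : {ffun box0 n R -> bool} => Pm (gU n @^-1` [set w]).
set wt := fun b : bool => if b then 1 - eps else eps.
set q := fun w : {ffun box0 n R -> bool} => \prod_s wt (w s).
have sq : \sum_w q w = 1.
  rewrite /q -(bigA_distr_bigA (fun (i : box0 n R) (j : bool) => wt j)) /=.
  by apply: big1 => i _; rewrite big_bool /wt /=; lra.
have sp : \sum_w p w = 1 by apply: Pm_sum1 => k; apply: meas_gU.
have p0 w : 0 <= p w by apply: Pm_ge0.
have wpos w s : 0 < p w -> 0 < wt (w s).
  rewrite /wt; case: ifP => ws pw; first lra.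
  rewrite lt_neqAle e0 andbT; apply/eqP => e00.
  have : p w <= beta.
    rewrite -(Pm_Uset_false (box0Z s)) -(margE s false).
    apply: Pm_le; [exact: meas_gU| |].
      by rewrite margE; apply: meas_Uset.
    by move=> x /= ->; rewrite ws.
  lra.
have q0 w : 0 <= q w.
  by apply: prodr_ge0 => s _; rewrite /wt; case: ifP => _; lra.
have qpos w : 0 < p w -> 0 < q w.
  by move=> pw; apply: prodr_gt0 => s _; apply: wpos.
have stepA : - \sum_w xlnx (p w) <= - \sum_w p w * ln (q w).
  rewrite -sumrN -sumrN.
  apply: (le_trans (ler_sum _ (fun w _ => gibbs_term (p0 w) (q0 w) (@qpos w)))).
  have spN : \sum_w - p w = -1 by rewrite sumrN sp.
  rewrite !big_split /= sq spN; lra.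
have stepB : \sum_w p w * ln (q w) = \sum_w \sum_s p w * ln (wt (w s)).
  apply: eq_bigr => w _.
  have [pw0|pwn0] := eqVneq (p w) 0.
    by rewrite pw0 mul0r big1 // => s _; rewrite mul0r.
  have pw : 0 < p w by rewrite lt_neqAle eq_sym pwn0 p0.
  by rewrite /q ln_prod ?mulr_sumr // => s _; apply: wpos.
have stepC s : \sum_w p w * ln (wt (w s)) = (1 - beta) * ln (1 - eps) + beta * ln eps.
  rewrite (bigID (fun w : {ffun box0 n R -> bool} => w s)) /=.
  rewrite (eq_bigr (fun w : {ffun box0 n R -> bool} => p w * ln (1 - eps))); last by move=> w ->.
  rewrite [X in _ + X](eq_bigr (fun w : {ffun box0 n R -> bool} => p w * ln eps)); last by move=> w /negbTE ->.
  rewrite -!mulr_suml.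
  have mf : \sum_(w : {ffun box0 n R -> bool} | ~~ w s) p w = beta.
    rewrite /p Pm_sumT; last by move=> k; apply: meas_gU.
    rewrite -(Pm_Uset_false (box0Z s)) -margE; congr Pm.
    by apply/seteqP; split => x /=; [move/negbTE|move=> ->].
  have mt : \sum_(w : {ffun box0 n R -> bool} | w s) p w = 1 - beta.
    by have := sp; rewrite (bigID (fun w : {ffun box0 n R -> bool} => w s)) /= mf; lra.
  by rewrite mf mt.
have ineq : - ((1 - beta) * ln (1 - eps) + beta * ln eps) <= Hbin eps.
  have xe : xlnx eps = eps * ln eps by rewrite /xlnx; case: eqP => [->|]; rewrite ?mul0r.
  have xe1 : xlnx (1 - eps) = (1 - eps) * ln (1 - eps).
    by rewrite /xlnx; case: eqP => [->|]; rewrite ?mul0r.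
  have lnle : ln eps <= ln (1 - eps).
    have [->|en0] := eqVneq eps 0; first by rewrite ln0 // subr0 ln1.
    have ep : 0 < eps by rewrite lt_neqAle eq_sym en0 e0.
    by rewrite ler_ln ?posrE; lra.
  have : 0 <= (eps - beta) * (ln (1 - eps) - ln eps).
    by apply: mulr_ge0; lra.
  rewrite /Hbin xe xe1 mulrBr !mulrBl; lra.
have Hb0 : 0 <= Hbin eps.
  have xe : xlnx eps = eps * ln eps by rewrite /xlnx; case: eqP => [->|]; rewrite ?mul0r.
  have xe1 : xlnx (1 - eps) = (1 - eps) * ln (1 - eps).
    by rewrite /xlnx; case: eqP => [->|]; rewrite ?mul0r.
  have h1 : eps * ln eps <= 0 by rewrite mulr_ge0_le0 // ?ln_le0; lra.
  have h2 : (1 - eps) * ln (1 - eps) <= 0 by rewrite mulr_ge0_le0 // ?ln_le0; lra.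
  rewrite /Hbin xe xe1; lra.
have Hle : part_entropy mu (gU n) <= #|{: box0 n R}|%:R * Hbin eps.
  rewrite /part_entropy -/p; apply: (le_trans stepA).
  rewrite stepB exchange_big /= (eq_bigr _ (fun s _ => stepC s)) sumr_const.
  by rewrite -mulNrn -[_ *+ _]mulr_natl; apply: ler_wpM2l.
have card : (#|{: box0 n R}| <= n ^ 2)%N.
  rewrite /box0 card_prod card_ord; nia.
have [->|nn0] := eqVneq n 0%N.
  by rewrite expr0n /= invr0 mulr0.
have np : (0 < n%:R ^+ 2 :> RR) by rewrite exprn_gt0 // ltr0n lt0n.
rewrite ler_pdivrMr // mulrC; apply: (le_trans Hle); apply: ler_wpM2r => //.
by rewrite -natrX ler_nat.
Qed.

Definition gG n (x : int * int -> A) : {ffun box1 n -> At} :=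
  part_join (@box1Z n) (labG pi) x.

Lemma gG_E n x (s : box1 n) : gG n x s = pi (x ((s.1.+1)%:Z, (s.2.+1)%:Z)).
Proof. by rewrite ffunE /labG /Defs.shift /box1Z /= !addr0. Qed.

Lemma meas_gG n l : measurable (gG n @^-1` [set l] : set (Sigma2 a0)).
Proof.
apply: (meas_dep (P := fun x => gG n x = l)
  (toZ := fun s : box1 n => ((s.1.+1)%:Z, (s.2.+1)%:Z))).
by move=> x y H <-; apply/ffunP => s; rewrite !gG_E H.
Qed.

Definition covers n (u : box0 n R) (s : box1 n) : bool :=
  [&& (u.1 <= s.1)%N, (s.1 < u.1 + R)%N, (u.2 < s.2)%N & (s.2 < u.2 + R)%N].

Definition Tset n (k : {ffun box0 n R -> bool}) : {set box1 n} :=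
  [set s | ~~ [exists u, k u && covers u s]].

Definition down n (j : 'I_n) : 'I_n :=
  Ordinal (leq_ltn_trans (leq_subr 1 j) (ltn_ord j)).

Hypothesis align : forall w : {ffun 'I_R * 'I_R -> A}, loc_adm F w ->
     forall i j j' : 'I_R, pi (w (i, j)) = pi (w (i, j')).

Lemma vert n x (u : box0 n R) (s : box1 n) :
  gU n x u = true -> covers u s -> gG n x s = gG n x (s.1, down s.2).
Proof.
rewrite gU_E /labU => /asboolP Hadm /and4P[h1 h2 h3 h4].
have hi : (s.1 - u.1 < R)%N by lia.
have hj : (s.2 - u.2 < R)%N by lia.
have hj' : (s.2 - 1 - u.2 < R)%N by lia.
have := align Hadm (Ordinal hi) (Ordinal hj) (Ordinal hj').
rewrite !ffunE /Defs.shift /box0Z /labG /= !addr0.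
have e1 : (u.1 : nat)%:Z + (s.1 - u.1).+1%:Z = (s.1.+1)%:Z.
  by rewrite -PoszD; congr Posz; lia.
have e2 : (u.2 : nat)%:Z + (s.2 - u.2).+1%:Z = (s.2.+1)%:Z.
  by rewrite -PoszD; congr Posz; lia.
have e3 : (u.2 : nat)%:Z + (s.2 - 1 - u.2).+1%:Z = ((s.2 - 1).+1)%:Z.
  by rewrite -PoszD; congr Posz; lia.
by rewrite e1 e2 e3.
Qed.

Lemma inj_Tset n x y k : gU n x = k -> gU n y = k ->
  (forall s, s \in Tset k -> gG n x s = gG n y s) -> gG n x = gG n y.
Proof.
move=> hx hy hT.
suff H : forall m (s : box1 n), (s.2 : nat) = m -> gG n x s = gG n y s.
  by apply/ffunP => s; apply: (H _ s erefl).
elim=> [|m IH] s hs.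
  apply: hT; rewrite inE; apply/existsP => -[u /andP[_]].
  by move=> /and4P[_ _]; rewrite hs ltn0.
have [hsT|hsT] := boolP (s \in Tset k); first by apply: hT.
move: hsT; rewrite inE negbK => /existsP[u /andP[ku cu]].
rewrite (@vert n x u s) ?hx // (@vert n y u s) ?hy //.
by apply: IH => /=; rewrite hs subn1.
Qed.

Lemma card_C n k :
  (#|[set l | Pm (gG n @^-1` [set l] `&` gU n @^-1` [set k]) != 0%R]%SET|
    <= #|At| ^ #|Tset k|)%N.
Proof.
set C := [set l | _]%SET.
pose rho (l : {ffun box1 n -> At}) : {ffun {s : box1 n | s \in Tset k} -> At} :=
  [ffun t => l (val t)].
have ex l : l \in C -> exists x, gG n x = l /\ gU n x = k.
  rewrite inE => hl; case: (pselect (exists x, gG n x = l /\ gU n x = k)) => // hn.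
  move: hl; suff -> : gG n @^-1` [set l] `&` gU n @^-1` [set k] = set0.
    by rewrite /Pm measure0 eqxx.
  by apply/seteqP; split => x //= [h1 h2]; apply: hn; exists x.
have injr : {in C &, injective rho}.
  move=> l1 l2 h1 h2 he.
  have [x1 [e1 k1]] := ex _ h1; have [x2 [e2 k2]] := ex _ h2.
  rewrite -e1 -e2; apply: (inj_Tset k1 k2) => s hs; rewrite e1 e2.
  have := congr1 (fun f : {ffun {s : box1 n | s \in Tset k} -> At} => f (exist _ s hs)) he.
  by rewrite !ffunE.
rewrite -(card_in_imset injr).
apply: (leq_trans (max_card _)).
by rewrite card_ffun card_sig.
Qed.

Lemma At_pos : (0 < #|At|)%N.
Proof. by apply/card_gt0P; exists (pi a0). Qed.

Lemma lnAt_ge0 : 0 <= ln (#|At|%:R : RR).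
Proof. by apply: ln_ge0; rewrite ler1n At_pos. Qed.

Lemma part2_sum n :
  cond_entropy mu (gG n) (gU n) <=
  ln (#|At|%:R : RR) * \sum_k Pm (gU n @^-1` [set k]) * #|Tset k|%:R.
Proof.
set p := fun l k => Pm (gG n @^-1` [set l] `&` gU n @^-1` [set k]).
set q := fun k => Pm (gU n @^-1` [set k]).
have qE k : q k = \sum_l p l k.
  rewrite /p (@Pm_sum _ (gG n) (gU n @^-1` [set k]) predT); last 2 first.
  - exact: meas_gU.
  - by move=> l; apply: meas_gG.
  by rewrite /q; congr Pm; apply/seteqP; split => x //= [].
rewrite /cond_entropy.
rewrite (eq_bigr (fun l => \sum_k (if p l k == 0 then 0 else p l k * ln (p l k / q k)))) //.
rewrite exchange_big /= -sumrN mulr_sumr.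
apply: ler_sum => k _.
apply: (le_trans (cond_term (p := fun l => p l k) (fun l => Pm_ge0 _) (qE k))).
rewrite -/(q k) mulrCA; apply: ler_wpM2l; first exact: Pm_ge0.
have hC := card_C k.
set c := #|_| in hC *.
have [->|c0] := eqVneq c 0%N.
  by rewrite ln0 // mulr_ge0 // lnAt_ge0.
have Atp : (0 < (#|At|%:R : RR)) by rewrite ltr0n At_pos.
apply: (@le_trans _ _ (ln ((#|At| ^ #|Tset k|)%:R))).
  by rewrite ler_ln ?posrE ?ler_nat ?ltr0n ?lt0n ?expn_gt0 ?At_pos // -lt0n expn_gt0 At_pos.
have -> : ((#|At| ^ #|Tset k|)%:R : RR) = (#|At|%:R ^+ #|Tset k|) by rewrite natrX.
by rewrite lnXn // mulr_natr.
Qed.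

Lemma sum_ind0 (m : nat) : (0 < m)%N ->
  \sum_(j < m) (if (j : nat) == 0%N then 1 else 0) = 1 :> RR.
Proof. by case: m => // m _; rewrite big_ord_recl /= big1 ?addr0. Qed.

Lemma part2 n (eps : RR) : (1 <= R)%N -> (R <= n)%N -> 0 <= eps -> beta <= eps ->
  cond_entropy mu (gG n) (gU n) / n%:R ^+ 2 <= (8 / R%:R + eps) * ln (#|At|%:R : RR).
Proof.
move=> R1 Rn e0 be.
set q := fun k => Pm (gU n @^-1` [set k]).
have sq : \sum_k q k = 1 by apply: Pm_sum1 => k; apply: meas_gU.
have q0 k : 0 <= q k by apply: Pm_ge0.
have S_eq : \sum_k q k * #|Tset k|%:R =
   \sum_(s : box1 n) \sum_k q k * (if s \in Tset k then 1 else 0).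
  rewrite exchange_big /=; apply: eq_bigr => k _; rewrite -mulr_sumr; congr (_ * _).
  rewrite -sum1_card natr_sum big_mkcond /=; apply: eq_bigr => s _.
  by case: (s \in Tset k).
have persite (s : box1 n) : \sum_k q k * (if s \in Tset k then 1 else 0)
    <= (if (1 < R)%N && (0 < s.2)%N then beta else 1).
  case: ifP => [/andP[R2 s2]|_]; last first.
    apply: (@le_trans _ _ (\sum_k q k)); last by rewrite sq.
    by apply: ler_sum => k _; case: ifP => _; rewrite ?mulr1 ?mulr0.
  have ha : (minn s.1 (n - R) < n.+1 - R)%N by lia.
  have hb : (minn (s.2 - 1) (n - R) < n.+1 - R)%N by lia.
  pose u0 : box0 n R := (Ordinal ha, Ordinal hb).
  have cu : covers u0 s.
    have := ltn_ord s.1; have := ltn_ord s.2; rewrite /covers /= => ? ?; apply/and4P; split; lia.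
  have hu k : s \in Tset k -> k u0 = false.
    rewrite inE => /existsPn /(_ u0); rewrite cu andbT; exact: negbTE.
  apply: (@le_trans _ _ (\sum_(k : {ffun box0 n R -> bool}) q k * (if k u0 then 0 else 1))).
    apply: ler_sum => k _; case: ifP => hs; first by rewrite (hu k hs).
    by case: (k u0); rewrite ?mulr0 ?mulr1.
  have -> : \sum_(k : {ffun box0 n R -> bool}) q k * (if k u0 then 0 else 1) = \sum_(k : {ffun box0 n R -> bool} | ~~ k u0) q k.
    by rewrite [RHS]big_mkcond; apply: eq_bigr => k _; case: (k u0); rewrite ?mulr0 ?mulr1.
  rewrite /q Pm_sumT; last by move=> k; apply: meas_gU.
  rewrite -(Pm_Uset_false (box0Z u0)) -margE le_eqVlt; apply/orP; left; apply/eqP.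
  by congr Pm; apply/seteqP; split => x /=; [move/negbTE|move=> ->].
have L0 := lnAt_ge0.
have np : (0 < n%:R ^+ 2 :> RR) by rewrite exprn_gt0 // ltr0n; lia.
rewrite ler_pdivrMr //; apply: (le_trans (part2_sum n)).
rewrite -/q S_eq (mulrC _ (ln _)) -mulrA; apply: ler_wpM2l => //.
have [R2|R2] := boolP (1 < R)%N.
  apply: (@le_trans _ _ (\sum_(s : box1 n) ((if (s.2 : nat) == 0%N then 1 else 0) + eps))).
    apply: ler_sum => s _; apply: (le_trans (persite s)); rewrite R2 /=.
    by case: (s.2 : nat) => [|m] /=; lra.
  rewrite big_split /= sumr_const /box1 card_prod card_ord.
  rewrite -(pair_bigA _ (fun (i j : 'I_n) => if (j : nat) == 0%N then 1 else 0)) /=.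
  have inner := @sum_ind0 n ltac:(lia).
  rewrite (eq_bigr (fun _ => 1)) ?sumr_const ?card_ord; last by move=> i _; exact: inner.
  have h8 : (n%:R : RR) <= 8 / R%:R * n%:R ^+ 2.
    rewrite mulrAC ler_pdivlMr; last by rewrite ltr0n; lia.
    have -> : (8 : RR) = 8%:R by []. by rewrite -natrX -!natrM ler_nat; nia.
  have -> : eps *+ (n * n) = eps * n%:R ^+ 2 by rewrite -[eps *+ _]mulr_natr natrM expr2.
  rewrite mulrDl; lra.
have R1' : R = 1%N by lia.
apply: (@le_trans _ _ (\sum_(s : box1 n) 1)).
  apply: ler_sum => s _; apply: (le_trans (persite s)); by rewrite (negbTE R2).
rewrite sumr_const /box1 card_prod card_ord R1' divr1 -mulr_natr natrM -expr2.
have : 0 <= n%:R ^+ 2 * eps :> RR by apply: mulr_ge0 => //; exact: ltW.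
lra.
Qed.

End Main.

Unset Implicit Arguments.
Theorem lemma2p4 (RR : realType) (A At : finType) (a0 : A) (pi : A -> At)
  (D : nat) (F : {set {ffun 'I_D * 'I_D -> A}}) (R : nat)
  (mu : probability (Sigma2 a0) RR) (eps : RR) :
  (1 <= D)%N -> (D <= R)%N ->
  (forall w : {ffun 'I_R * 'I_R -> A}, loc_adm F w ->
     forall i j j' : 'I_R, pi (w (i, j)) = pi (w (i, j'))) ->
  shift_invariant mu -> ergodic mu ->
  0 <= eps -> eps <= 1 / 2 ->
  (mu (~` cylM R F : set (Sigma2 a0)) <= eps%:E)%E ->
  (limn_esup (fun n : nat =>
      ((part_entropy mu (part_join (@box0Z n R) (labU R F))) / (n%:R ^+ 2))%:E)
     <= (Hbin eps)%:E)%E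
  /\
  (limn_esup (fun n : nat =>
      ((cond_entropy mu (part_join (@box1Z n) (labG pi))
                        (part_join (@box0Z n R) (labU R F))) / (n%:R ^+ 2))%:E)
     <= ((8 / R%:R + eps) * ln (#|At|%:R))%:E)%E.
Proof.
move=> D1 DR Hal shinv _ e0 e12 Hmu.
have R1 : (1 <= R)%N by apply: leq_trans DR.
have be : beta F R mu <= eps.
  have fin := mu_fin mu (measurableC (meas_cylM (a0:=a0) F R)).
  by rewrite /beta /Pm -lee_fin fineK.
split.
- apply: (@esup_ev _ _ _ 0%N) => n _; rewrite lee_fin.
  exact: (part1 shinv n e0 e12 be R1).
- apply: (@esup_ev _ _ _ R) => n Rn; rewrite lee_fin.
  exact: (part2 shinv Hal R1 Rn e0 be).
Qed.
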